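(* Let $m\ge3$, $p\ne q\in[m]$, and let $\lambda_1,\lambda_2,\lambda_3$ be $\mathbb{Z}_2$-characteristic maps over $P_m$ with $\lambda_i(p)=\mathbf a$ and $\lambda_i(q)=\mathbf b$ for $i=1,2,3$, such that $\lambda_1,\lambda_2$ are $p$-adjacent and $\lambda_1,\lambda_3$ are $q$-adjacent. Then the following are equivalent: (1) the edges $\{\lambda_1,\lambda_2,p\}$ and $\{\lambda_1,\lambda_3,q\}$ span a realizable square, i.e. there is a $\mathbb{Z}_2$-characteristic map $\Lambda$ over $\mathrm{wed}_{p,q}P_m$ with $\operatorname{proj}_{\{p_2,q_2\}}\Lambda\simeq\lambda_1$, $\operatorname{proj}_{\{p_1,q_2\}}\Lambda\simeq\lambda_2$, $\operatorname{proj}_{\{p_2,q_1\}}\Lambda\simeq\lambda_3$; (2) $\overline{\lambda_1\Delta\lambda_2}\cap(\lambda_1\Delta\lambda_3)=\varnothing$; (3) $\overline{\lambda_1\Delta\lambda_2}\cap\overline{\lambda_1\Delta\lambda_3}=\varnothing$.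
   Context: $P_m$: simplicial complex on $[m]$ with facets $\{i,i+1\}$ mod $m$. $\mathbf a=(1,0)^T,\mathbf b=(0,1)^T,\mathbf c=(1,1)^T$; a $\mathbb{Z}_2$-characteristic map over $P_m$ is a map $[m]\to\{\mathbf a,\mathbf b,\mathbf c\}$ with $\lambda(i)\ne\lambda(i+1)$ mod $m$; $\simeq$ is D-J equivalence (composition with an element of $GL(n,\mathbb{Z}_2)$). For characteristic maps $\mu,\nu$, $\mu\Delta\nu=\{v\in[m]:\mu(v)\ne\nu(v)\}$; for $A\subseteq[m]$, $\overline A=\{v-1,v,v+1 \bmod m: v\in A\}$. Wedges: $\mathrm{wed}_pK$ replaces $p$ by $p_1,p_2$, with minimal non-faces those of $K$ with $p$ replaced by $\{p_1,p_2\}$ when it occurs; $\mathrm{wed}_{p,q}K$ does this for both $p$ and $q$. Projection: $\operatorname{proj}_\sigma\Lambda(w)=[\Lambda(w)]\in\mathbb{Z}_2^n/\langle\Lambda(v):v\in\sigma\rangle$ for $w$ in the link of $\sigma$; links of $p_2$ (resp. $p_1$) in $\mathrm{wed}_pK$ are identified with $K$ via $p_1\mapsto p$ (resp. $p_2\mapsto p$), and the link of $\{p_i,q_j\}$ in $\mathrm{wed}_{p,q}P_m$ with $P_m$ via $p_{3-i}\mapsto p,q_{3-j}\mapsto q$. D-J classes $\lambda,\lambda'$ over $P_m$ are $p$-adjacent if some characteristic map $\Lambda$ over $\mathrm{wed}_pP_m$ has $\operatorname{proj}_{p_2}\Lambda\simeq\lambda$, $\operatorname{proj}_{p_1}\Lambda\simeq\lambda'$.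 *)

(* Defs.v *)
From HB Require Import structures.
From mathcomp Require Import all_boot all_order all_algebra.
Set Implicit Arguments.
Unset Strict Implicit.
Unset Printing Implicit Defensive.
Import GRing.Theory.

Notation Z2 := 'F_2.

Definition vec_a : 'rV[Z2]_2 := \row_(j < 2) (if j == ord0 then 1%R else 0%R).
Definition vec_b : 'rV[Z2]_2 := \row_(j < 2) (if j == ord0 then 0%R else 1%R).
Definition vec_c : 'rV[Z2]_2 := \row_(j < 2) 1%R.

Definition Pm_face (m : nat) (S : {set 'I_m}) : bool :=
  [exists i : 'I_m, S \subset [set i; ordS i]].

Definition charmap_Pm (m : nat) (l : 'I_m -> 'rV[Z2]_2) : Prop :=
  forall i : 'I_m, l i \in [:: vec_a; vec_b; vec_c] /\ l i != l (ordS i).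

Definition symdiff (m : nat) (mu nu : 'I_m -> 'rV[Z2]_2) : {set 'I_m} :=
  [set v | mu v != nu v].

Definition nbhd (m : nat) (A : {set 'I_m}) : {set 'I_m} :=
  [set w | [exists v in A, [|| w == ord_pred v, w == v | w == ordS v]]].

(* A simplicial complex on a finite vertex type V is given by its face predicate. *)

Definition min_nonfaces (V : finType) (K : {set V} -> bool) : {set {set V}} :=
  [set N : {set V} | ~~ K N & [forall T : {set V}, (T \proper N) ==> K T]].

(* wed_p K, vertex type [option V]:  Some v = v (v <> p),
   Some p = p_1, None = p_2.  Minimal non-faces: those of K with p replaced
   by {p_1, p_2}. *)
Definition wed1_rep (V : finType) (p : V) (N : {set V}) : {set option V} :=
  (Some @: N) :|: (if p \in N then [set None] else set0).

Definition wed1 (V : finType) (K : {set V} -> bool) (p : V)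
    (S : {set option V}) : bool :=
  [forall N in min_nonfaces K, ~~ (wed1_rep p N \subset S)].

(* wed_{p,q} K, vertex type [V + bool]: inl v = v (v <> p,q),
   inl p = p_1, inr false = p_2, inl q = q_1, inr true = q_2. *)
Definition wed2_rep (V : finType) (p q : V) (N : {set V}) : {set V + bool} :=
  (inl @: N) :|: (if p \in N then [set inr false] else set0)
             :|: (if q \in N then [set inr true] else set0).

Definition wed2 (V : finType) (K : {set V} -> bool) (p q : V)
    (S : {set V + bool}) : bool :=
  [forall N in min_nonfaces K, ~~ (wed2_rep p q N \subset S)].

Definition is_charmap (V : finType) (n : nat) (K : {set V} -> bool)
    (L : V -> 'rV[Z2]_n) : Prop :=
  forall S : {set V}, K S -> free [seq L v | v <- enum S].

(* proj_sigma L ~ l (D-J equivalent), where the link of sigma is identified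
   with [m] through kappa : 'I_m -> V (kappa v = vertex of the link
   corresponding to v).  The quotient Z_2^n / <L v : v in sigma> is
   represented via linear surjections M : Z_2^n -> Z_2^k with kernel exactly
   <L v : v in sigma>; such M are exactly the compositions of the quotient
   map with linear isomorphisms onto Z_2^k, so the existence of M with
   [L (kappa v)] |-> l v means proj_sigma L ~ l. *)
Definition proj_equiv (V : finType) (n k m : nat) (L : V -> 'rV[Z2]_n)
    (sigma : {set V}) (kappa : 'I_m -> V) (l : 'I_m -> 'rV[Z2]_k) : Prop :=
  exists M : 'M[Z2]_(n, k),
    [/\ row_full M,
        (kermx M == (\sum_(v in sigma) <<L v>>)%MS)%MS
      & forall v : 'I_m, (L (kappa v) *m M)%R = l v].

(* link of p_2 : p_1 |-> p *)
Definition kap_p2 (m : nat) (v : 'I_m) : option 'I_m := Some v.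
(* link of p_1 : p_2 |-> p *)
Definition kap_p1 (m : nat) (p : 'I_m) (v : 'I_m) : option 'I_m :=
  if v == p then None else Some v.

Definition p_adjacent (m : nat) (p : 'I_m) (l l' : 'I_m -> 'rV[Z2]_2) : Prop :=
  exists L : option 'I_m -> 'rV[Z2]_3,
    [/\ is_charmap (wed1 (@Pm_face m) p) L,
        proj_equiv L [set None] (@kap_p2 m) l
      & proj_equiv L [set Some p] (kap_p1 p) l'].

(* identification of the link of {p_i, q_j} in wed_{p,q} P_m with P_m:
   p |-> pp (= p_{3-i}), q |-> qq (= q_{3-j}), v |-> v otherwise *)
Definition kap2 (m : nat) (p q : 'I_m) (pp qq : 'I_m + bool) (v : 'I_m)
    : 'I_m + bool :=
  if v == p then pp else if v == q then qq else inl v.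

Definition square_realizable (m : nat) (p q : 'I_m)
    (l1 l2 l3 : 'I_m -> 'rV[Z2]_2) : Prop :=
  exists L : 'I_m + bool -> 'rV[Z2]_4,
    [/\ is_charmap (wed2 (@Pm_face m) p q) L,
        (* proj_{p_2, q_2} L ~ l1 *)
        proj_equiv L [set inr false; inr true] (kap2 p q (inl p) (inl q)) l1,
        (* proj_{p_1, q_2} L ~ l2 *)
        proj_equiv L [set inl p; inr true] (kap2 p q (inr false) (inl q)) l2
      & (* proj_{p_2, q_1} L ~ l3 *)
        proj_equiv L [set inr false; inl q] (kap2 p q (inl p) (inr true)) l3].

(* Main.v *)
Require Import Defs.
From HB Require Import structures.
From mathcomp Require Import all_boot all_order all_algebra.
From mathcomp Require Import zify.
Set Implicit Arguments. Unset Strict Implicit. Unset Printing Implicit Defensive.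
Import GRing.Theory.

Section Helpers.
Local Open Scope ring_scope.

Definition j0 : 'I_2 := @Ordinal 2 0 isT.
Definition j1 : 'I_2 := @Ordinal 2 1 isT.
Definition i0 : 'I_4 := @Ordinal 4 0 isT.
Definition i1 : 'I_4 := @Ordinal 4 1 isT.
Definition i2 : 'I_4 := @Ordinal 4 2 isT.
Definition i3 : 'I_4 := @Ordinal 4 3 isT.

Lemma F2_cases (x : Z2) : x = 0 \/ x = 1.
Proof. case: x => [[|[|n]] Hn]; [left|right|]; try exact/val_inj. by []. Qed.

Lemma F2_add_same (x : Z2) : x + x = 0.
Proof. by case: (F2_cases x) => ->; [rewrite addr0 | exact/eqP]. Qed.

Lemma rV_add_same n (x : 'rV[Z2]_n) : x + x = 0.
Proof. by apply/rowP => j; rewrite !mxE F2_add_same. Qed.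

Lemma I2_cases (j : 'I_2) : j = j0 \/ j = j1.
Proof. case: j => [[|[|n]] Hn]; [left|right|]; try exact/val_inj. by []. Qed.

Lemma I4_cases (k : 'I_4) : [\/ k = i0, k = i1, k = i2 | k = i3].
Proof.
case: k => [[|[|[|[|n]]]] Hn];
  [apply: Or41|apply: Or42|apply: Or43|apply: Or44|]; try exact/val_inj. by [].
Qed.

Definition abc : seq 'rV[Z2]_2 := [:: vec_a; vec_b; vec_c].

Lemma neq_ab : (vec_a == vec_b) = false.
Proof. by apply/eqP => /rowP /(_ j0); rewrite !mxE => /eqP. Qed.
Lemma neq_ac : (vec_a == vec_c) = false.
Proof. by apply/eqP => /rowP /(_ j1); rewrite !mxE => /eqP. Qed.
Lemma neq_bc : (vec_b == vec_c) = false.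
Proof. by apply/eqP => /rowP /(_ j0); rewrite !mxE => /eqP. Qed.
Lemma neq_ba : (vec_b == vec_a) = false.
Proof. by rewrite eq_sym neq_ab. Qed.
Lemma neq_ca : (vec_c == vec_a) = false.
Proof. by rewrite eq_sym neq_ac. Qed.
Lemma neq_cb : (vec_c == vec_b) = false.
Proof. by rewrite eq_sym neq_bc. Qed.
Definition neqs := (neq_ab, neq_ac, neq_bc, neq_ba, neq_ca, neq_cb, eqxx).

Lemma abc_cases (x : 'rV[Z2]_2) : x \in abc -> [\/ x = vec_a, x = vec_b | x = vec_c].
Proof. by rewrite !inE => /or3P [] /eqP ->; [apply: Or31|apply: Or32|apply: Or33]. Qed.

Lemma abc_ne0 (x : 'rV[Z2]_2) : x \in abc -> x != 0.
Proof.
case/abc_cases => ->; apply/eqP => /rowP; [move/(_ j0)|move/(_ j1)|move/(_ j0)];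
  by rewrite !mxE => /eqP.
Qed.

Lemma cm_abc m (l : 'I_m -> 'rV[Z2]_2) v : charmap_Pm l -> l v \in abc.
Proof. by move=> H; case: (H v). Qed.

Lemma cm_adj m (l : 'I_m -> 'rV[Z2]_2) v : charmap_Pm l -> l v != l (ordS v).
Proof. by move=> H; case: (H v). Qed.

Lemma rV2_decomp (r : 'rV[Z2]_2) : r = r 0 j0 *: vec_a + r 0 j1 *: vec_b.
Proof.
apply/rowP => j; rewrite !mxE; case: (I2_cases j) => ->; rewrite /=.
  by rewrite mulr1 mulr0 addr0.
by rewrite mulr1 mulr0 add0r.
Qed.

Lemma ker1 n k (M : 'M[Z2]_(n, k)) (x : 'rV_n) :
  (kermx M == <<x>>)%MS -> x *m M = 0 /\
  forall t : 'rV_n, t *m M = 0 -> t = 0 \/ t = x.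
Proof.
case/andP => h1 h2; split.
  by apply/sub_kermxP; apply: submx_trans h2; rewrite genmxE.
move=> t /sub_kermxP ht; have := submx_trans ht h1; rewrite genmxE.
case/submxP => D ->; rewrite (mx11_scalar D) mul_scalar_mx.
by case: (F2_cases (D 0 0)) => ->; [left; rewrite scale0r | right; rewrite scale1r].
Qed.

Lemma ker2 n k (M : 'M[Z2]_(n, k)) (x y : 'rV_n) :
  (kermx M == <<x>> + <<y>>)%MS -> [/\ x *m M = 0, y *m M = 0 &
  forall t : 'rV_n, t *m M = 0 -> exists s s', t = s *: x + s' *: y].
Proof.
case/andP => h1 h2; split.
- apply/sub_kermxP; apply: submx_trans h2; rewrite addsmxC.
  by apply: submx_trans (addsmxSr _ _); rewrite genmxE.
- apply/sub_kermxP; apply: submx_trans h2.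
  by apply: submx_trans (addsmxSr _ _); rewrite genmxE.
move=> t /sub_kermxP ht; have := submx_trans ht h1.
rewrite (adds_eqmx (genmxE x) (genmxE y)) => /sub_addsmxP [[u1 u2] ->] /=.
exists (u1 0 0), (u2 0 0).
by rewrite -!mul_scalar_mx -!mx11_scalar.
Qed.

Lemma sum_set2 (V : finType) n (x y : V) (F : V -> 'M[Z2]_n) : x != y ->
  (\sum_(v in [set x; y]) F v = F x + F y)%MS.
Proof. by move=> xy; rewrite big_setU1 ?inE // big_set1. Qed.


Lemma padj_same m (p : 'I_m) (l l' : 'I_m -> 'rV[Z2]_2) z :
  p_adjacent p l l' -> charmap_Pm l -> charmap_Pm l' -> l p = z -> l' p = z ->
  forall v, (l v == z) = (l' v == z).
Proof.
case=> L [_ [M1 [_ k1 e1]] [M2 [_ k2 e2]]] Hl Hl' lp l'p v.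
rewrite big_set1 in k1; rewrite big_set1 in k2.
have [xM1 K1] := ker1 k1; have [yM2 K2] := ker1 k2.
have yM1 : L (Some p) *m M1 = z by rewrite -lp -e1.
have xM2 : L None *m M2 = z by rewrite -l'p -e2 /kap_p1 eqxx.
case: (eqVneq v p) => [-> | vp]; first by rewrite lp l'p !eqxx.
have E1 : L (Some v) *m M1 = l v := e1 v.
have E2 : L (Some v) *m M2 = l' v by rewrite -e2 /kap_p1 (negbTE vp).
have n1 := abc_ne0 (cm_abc v Hl); have n2 := abc_ne0 (cm_abc v Hl').
apply/eqP/eqP => H.
- have : (L (Some v) - L (Some p)) *m M1 = 0 by rewrite mulmxBl E1 yM1 H subrr.
  case/K1 => /eqP; rewrite subr_eq ?add0r => /eqP Hv.
    by move: n2; rewrite -E2 Hv yM2 eqxx.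
  by rewrite -E2 Hv mulmxDl xM2 yM2 addr0.
- have : (L (Some v) - L None) *m M2 = 0 by rewrite mulmxBl E2 xM2 H subrr.
  case/K2 => /eqP; rewrite subr_eq ?add0r => /eqP Hv.
    by move: n1; rewrite -E1 Hv xM1 eqxx.
  by rewrite -E1 Hv mulmxDl xM1 yM1 addr0.
Qed.

Ltac abc_split H := case/abc_cases: H => ->.

Lemma vals_A (x1 x2 x3 : 'rV[Z2]_2) : x1 \in abc -> x2 \in abc -> x3 \in abc ->
  (x1 == vec_a) = (x2 == vec_a) -> (x1 == vec_b) = (x3 == vec_b) ->
  x1 != x2 -> x1 != x3 -> [/\ x1 = vec_c, x2 = vec_b & x3 = vec_a].
Proof.
move=> h1 h2 h3; abc_split h1; abc_split h2; abc_split h3; rewrite ?neqs //.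
Qed.

Lemma vals_B (v1 v3 w1 w2 : 'rV[Z2]_2) : v1 \in abc -> v3 \in abc ->
  w1 \in abc -> w2 \in abc ->
  (v1 == vec_b) = (v3 == vec_b) -> (w1 == vec_a) = (w2 == vec_a) ->
  v1 != v3 -> w1 != w2 -> v1 != w1 -> v1 != w2 -> v3 != w1 ->
  [/\ v1 = vec_a, v3 = vec_c, w1 = vec_b & w2 = vec_c].
Proof.
move=> h1 h2 h3 h4; abc_split h1; abc_split h2; abc_split h3; abc_split h4;
  rewrite ?neqs //.
Qed.

Lemma vals_C2 (t w1 w2 : 'rV[Z2]_2) : t \in abc -> w1 \in abc -> w2 \in abc ->
  (w1 == vec_a) = (w2 == vec_a) -> w1 != w2 -> t != w1 -> t != w2 -> t = vec_a.
Proof.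
move=> h1 h2 h3; abc_split h1; abc_split h2; abc_split h3; rewrite ?neqs //.
Qed.

Lemma vals_C3 (t w1 w2 : 'rV[Z2]_2) : t \in abc -> w1 \in abc -> w2 \in abc ->
  (w1 == vec_b) = (w2 == vec_b) -> w1 != w2 -> t != w1 -> t != w2 -> t = vec_b.
Proof.
move=> h1 h2 h3; abc_split h1; abc_split h2; abc_split h3; rewrite ?neqs //.
Qed.

Definition near m (x w : 'I_m) := [|| x == ord_pred w, x == w | x == ordS w].

Lemma in_nbhd m (A : {set 'I_m}) x : (x \in nbhd A) = [exists w in A, near x w].
Proof. by rewrite inE. Qed.

Lemma near_sym m (x w : 'I_m) : near x w -> near w x.
Proof.
rewrite /near => /or3P [] /eqP ->.
- by rewrite ord_predK eqxx !orbT.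
- by rewrite eqxx orbT.
- by rewrite ordSK eqxx.
Qed.

Lemma near_neq m (l : 'I_m -> 'rV[Z2]_2) x w : charmap_Pm l -> near x w -> x != w ->
  l x != l w.
Proof.
move=> H /or3P [] /eqP ->; rewrite ?eqxx //.
- by move=> _; rewrite -{2}(ord_predK w); exact: (cm_adj (ord_pred w) H).
- by move=> _; rewrite eq_sym; exact: (cm_adj w H).
Qed.

Lemma near_refl m (x : 'I_m) : near x x.
Proof. by rewrite /near eqxx orbT. Qed.


Lemma in_symdiff m (mu nu : 'I_m -> 'rV[Z2]_2) v : (v \in symdiff mu nu) = (mu v != nu v).
Proof. by rewrite inE. Qed.

Lemma in_nbhd_self m (A : {set 'I_m}) x : x \in A -> x \in nbhd A.
Proof. by move=> xA; rewrite in_nbhd; apply/exists_inP; exists x => //; exact: near_refl. Qed.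

Lemma two_three m (l1 l2 l3 : 'I_m -> 'rV[Z2]_2) :
  charmap_Pm l1 -> charmap_Pm l2 -> charmap_Pm l3 ->
  (forall v, (l1 v == vec_a) = (l2 v == vec_a)) ->
  (forall v, (l1 v == vec_b) = (l3 v == vec_b)) ->
  nbhd (symdiff l1 l2) :&: symdiff l1 l3 = set0 ->
  nbhd (symdiff l1 l2) :&: nbhd (symdiff l1 l3) = set0.
Proof.
move=> H1 H2 H3 A2 A3 H.
have nD3 : forall y, y \in nbhd (symdiff l1 l2) -> y \notin symdiff l1 l3.
  move=> y hy; apply/negP => hy3.
  by have := in_set0 y; rewrite -H inE hy hy3.
apply/setP => x; rewrite inE in_set0; apply/negP => /andP [].
move=> hx2; rewrite in_nbhd => /exists_inP [w3 w3D nx3].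
have := hx2; rewrite in_nbhd => /exists_inP [w2 w2D nx2].
have xD3 := nD3 _ hx2.
have xD2 : x \notin symdiff l1 l2.
  apply/negP => xD2; move: w3D; apply/negP; apply: nD3.
  by rewrite in_nbhd; apply/exists_inP; exists x => //; exact: near_sym.
have xw2 : x != w2 by apply: contraNneq xD2 => ->.
have xw3 : x != w3 by apply: contraNneq xD3 => ->.
move: xD2 xD3 w2D w3D; rewrite !in_symdiff !negbK => /eqP e2 /eqP e3 d2 d3.
have ta : l1 x = vec_a.
  apply: (vals_C2 (cm_abc x H1) (cm_abc w2 H1) (cm_abc w2 H2) (A2 w2) d2).
    exact: near_neq H1 nx2 xw2.
  by rewrite e2; exact: near_neq H2 nx2 xw2.
have tb : l1 x = vec_b.
  apply: (vals_C3 (cm_abc x H1) (cm_abc w3 H1) (cm_abc w3 H3) (A3 w3) d3).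
    exact: near_neq H1 nx3 xw3.
  by rewrite e3; exact: near_neq H3 nx3 xw3.
by move: neq_ab; rewrite -ta -tb eqxx.
Qed.

Lemma Pm_face_sub m (F N : {set 'I_m}) : Pm_face F -> N \subset F -> Pm_face N.
Proof.
case/existsP => i hi hN; apply/existsP; exists i; exact: subset_trans hN hi.
Qed.

Lemma min_nonface_exists (V : finType) (K : {set V} -> bool) (X : {set V}) :
  ~~ K X -> exists2 N, N \in min_nonfaces K & N \subset X.
Proof.
move: {2}#|X| (leqnn #|X|) => n; elim: n X => [|n IH] X hX nK.
  case: (boolP [forall T : {set V}, (T \proper X) ==> K T]) => hall.
    by exists X => //; rewrite inE nK.
  case/forallPn: hall => T; rewrite negb_imply => /andP [TX nT].
  by move: (proper_card TX); rewrite ltnNge (leq_trans hX (leq0n _)) // ; rewrite leqn0 in hX; rewrite (eqP hX).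
case: (boolP [forall T : {set V}, (T \proper X) ==> K T]) => hall.
  by exists X => //; rewrite inE nK.
case/forallPn: hall => T; rewrite negb_imply => /andP [TX nT].
have [N hN NT] := IH T (leq_trans (proper_card TX) hX) nT.
by exists N => //; apply: subset_trans NT (proper_sub TX).
Qed.


Lemma free_sub (V : finType) n (L : V -> 'rV[Z2]_n) (t1 t2 : seq V) :
  uniq t1 -> {subset t1 <= t2} -> free (map L t2) -> free (map L t1).
Proof.
move=> u1 hsub fr.
have pe : perm_eq t1 (filter (mem t1) (undup t2)).
  apply: uniq_perm => //; first exact/filter_uniq/undup_uniq.
  move=> x; rewrite mem_filter mem_undup; apply/idP/andP => [h|[] //].
  by split => //; exact: hsub.
rewrite (perm_free (perm_map L pe)).
have ss : subseq (map L (filter (mem t1) (undup t2))) (map L t2).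
  exact/map_subseq/(subseq_trans (filter_subseq _ _))/undup_subseq.
case: (perm_to_subseq ss) => s3 pe3.
by move: fr; rewrite (perm_free pe3) => /catl_free.
Qed.

Lemma notin_span n (phi : 'cV[Z2]_n) (X : seq 'rV[Z2]_n) v :
  (forall z, z \in X -> (z *m phi) 0 0 = 0) -> (v *m phi) 0 0 != 0 ->
  v \notin <<X>>%VS.
Proof.
move=> hX hv; apply/negP => /(coord_span (X := in_tuple X)) ev.
move: hv; rewrite ev mulmx_suml summxE big1 ?eqxx // => i _.
rewrite -scalemxAl mxE hX ?mulr0 //.
by apply: mem_nth; exact: ltn_ord.
Qed.

Definition erow (k : 'I_4) : 'rV[Z2]_4 := \row_j ((j == k)%:R).
Definition colf (R S : 'I_4) (al be : Z2) : 'cV[Z2]_4 :=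
  \col_k (if k == R then al else if k == S then be else 0).
Definition selm (f0 f1 : 'I_4) : 'M[Z2]_(4, 2) :=
  \matrix_(i, j) ((i == (if j == j0 then f0 else f1))%:R).

Lemma colfE (z : 'rV[Z2]_4) R S al be : R != S ->
  (z *m colf R S al be) 0 0 = z 0 R * al + z 0 S * be.
Proof.
move=> RS; have SR : S != R by rewrite eq_sym.
rewrite mxE (bigD1 R) //= (bigD1 S) //= !mxE eqxx (negbTE SR) eqxx.
rewrite big1 ?addr0 // => k /andP [kS kR].
by rewrite !mxE (negbTE kR) (negbTE kS) mulr0.
Qed.

Lemma mulmx_sel (u : 'rV[Z2]_4) f0 f1 :
  u *m selm f0 f1 = \row_j u 0 (if j == j0 then f0 else f1).
Proof.
apply/rowP => j; rewrite !mxE (bigD1 (if j == j0 then f0 else f1)) //= !mxE eqxx mulr1.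
by rewrite big1 ?addr0 // => i /negbTE ne; rewrite !mxE ne mulr0.
Qed.

Lemma erowE k j : erow k 0 j = (j == k)%:R.
Proof. by rewrite mxE. Qed.

Lemma det_ne0 (u w : 'rV[Z2]_2) : u \in abc -> w \in abc -> u != w ->
  u 0 j0 * w 0 j1 + u 0 j1 * w 0 j0 != 0.
Proof.
by move=> h1 h2; abc_split h1; abc_split h2; rewrite ?neqs // !mxE /= => _; apply/eqP.
Qed.

Lemma sq_ne0 (w : 'rV[Z2]_2) : w \in abc ->
  w 0 j0 * w 0 j0 + w 0 j1 * (1 - w 0 j0) != 0.
Proof. by move=> h; abc_split h; rewrite !mxE /=; apply/eqP. Qed.

Lemma facet_free (I J R S : 'I_4) (x y : 'rV[Z2]_4) :
  I != J -> R != S -> R != I -> R != J -> S != I -> S != J ->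
  x *m selm R S \in abc -> y *m selm R S \in abc ->
  x *m selm R S != y *m selm R S ->
  free [:: x; y; erow I; erow J].
Proof.
move=> IJ RS RI RJ SI SJ hx hy hxy.
have ex j : (x *m selm R S) 0 j = x 0 (if j == j0 then R else S) by rewrite mulmx_sel mxE.
have ey j : (y *m selm R S) 0 j = y 0 (if j == j0 then R else S) by rewrite mulmx_sel mxE.
rewrite !free_cons nil_free andbT; apply/and4P; split.
- apply: (notin_span (phi := colf R S (y 0 S) (y 0 R))).
    move=> z; rewrite !inE => /or3P [] /eqP ->; rewrite colfE // ?erowE.
    + by rewrite [y 0 S * _]mulrC F2_add_same.
    + by rewrite (negbTE RI) (negbTE SI) !mul0r addr0.
    + by rewrite (negbTE RJ) (negbTE SJ) !mul0r addr0.
  rewrite colfE //; have := det_ne0 hx hy hxy.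
  by rewrite !ex !ey /= [x 0 S * _]mulrC.
- apply: (notin_span (phi := colf R S (y 0 R) (1 - y 0 R))).
    move=> z; rewrite !inE => /orP [] /eqP ->; rewrite colfE // ?erowE.
    + by rewrite (negbTE RI) (negbTE SI) !mul0r addr0.
    + by rewrite (negbTE RJ) (negbTE SJ) !mul0r addr0.
  by rewrite colfE //; have := sq_ne0 hy; rewrite !ey.
- apply: (notin_span (phi := colf I J 1 0)).
    move=> z; rewrite !inE => /eqP ->; rewrite colfE // ?erowE.
    by rewrite (negbTE IJ) mul0r mulr0 addr0.
  by rewrite colfE // !erowE eqxx mulr0 addr0 mulr1; apply/eqP.
- apply: (notin_span (phi := colf J I 1 0)) => //.
  by rewrite colfE 1?eq_sym // !erowE eqxx mulr0 addr0 mulr1; apply/eqP.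
Qed.


Lemma kap2_p m (p q : 'I_m) pp qq : kap2 p q pp qq p = pp.
Proof. by rewrite /kap2 eqxx. Qed.
Lemma kap2_q m (p q : 'I_m) pp qq : p != q -> kap2 p q pp qq q = qq.
Proof. by move=> pq; rewrite /kap2 eq_sym (negbTE pq) eqxx. Qed.
Lemma kap2_o m (p q : 'I_m) pp qq v : v != p -> v != q -> kap2 p q pp qq v = inl v.
Proof. by move=> vp vq; rewrite /kap2 (negbTE vp) (negbTE vq). Qed.

Lemma wed2_inl m (p q : 'I_m) (F : {set 'I_m}) : Pm_face F ->
  wed2 (@Pm_face m) p q ((inl @: F) :|: [set inl p; inl q]).
Proof.
move=> hF; apply/forall_inP => N; rewrite inE => /andP [nK _]; apply/negP => hsub.
have pN : p \notin N.
  apply/negP => pN; have : inr false \in wed2_rep p q N.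
    by rewrite /wed2_rep pN !inE eqxx !orbT.
  move/(subsetP hsub); rewrite !inE => /orP [/imsetP [? _] //|/orP [] /eqP //].
have qN : q \notin N.
  apply/negP => qN; have : inr true \in wed2_rep p q N.
    by rewrite /wed2_rep qN !inE eqxx !orbT.
  move/(subsetP hsub); rewrite !inE => /orP [/imsetP [? _] //|/orP [] /eqP //].
move/negP: nK; apply; apply: (Pm_face_sub hF); apply/subsetP => v vN.
have : inl v \in wed2_rep p q N by rewrite /wed2_rep !inE imset_f ?vN.
move/(subsetP hsub); rewrite !inE => /orP [/imsetP [w wF [->]] //|/orP [] /eqP [] ev].
  by move: pN; rewrite -ev vN.
by move: qN; rewrite -ev vN.
Qed.

Lemma ordS_neq m (i : 'I_m) : (2 <= m)%N -> i != ordS i.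
Proof.
move=> m2; apply/eqP => /(congr1 val) /=.
case: (ltngtP i.+1 m) => h.
- by rewrite modn_small // => e; lia.
- by move: (ltn_ord i) => ?; lia.
- by rewrite h modnn => e; move: (ltn_ord i) => ?; lia.
Qed.

Lemma cover m (p q : 'I_m) (S : {set 'I_m + bool}) : p != q ->
  wed2 (@Pm_face m) p q S -> exists bp bq (i : 'I_m),
  {subset enum S <= [:: kap2 p q (if bp then inl p else inr false)
                                  (if bq then inl q else inr true) i;
                       kap2 p q (if bp then inl p else inr false)
                                  (if bq then inl q else inr true) (ordS i);
                       if bp then inr false else inl p;
                       if bq then inr true else inl q]}.
Proof.
move=> pq hS.
pose pi := [set v | ((v != p) && (v != q) && (inl v \in S))
   || ((v == p) && (inl p \in S) && (inr false \in S))
   || ((v == q) && (inl q \in S) && (inr true \in S))].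
have fpi : Pm_face pi.
  case: (boolP (Pm_face pi)) => // nf; have [N hN Nsub] := min_nonface_exists nf.
  exfalso; move/forall_inP: hS => /(_ N hN) /negP; apply.
  have h1 v : v \in pi -> inl v \in S.
    by rewrite inE => /orP [/orP [/andP [_ ->] //|] |] /andP [/andP [/eqP -> ->] _].
  have h2 : p \in pi -> inr false \in S.
    by rewrite inE eqxx (negbTE pq) /= orbF => /andP [_ ->].
  have h3 : q \in pi -> inr true \in S.
    by rewrite inE eqxx eq_sym (negbTE pq) /= => /andP [_ ->].
  apply/subsetP => x; rewrite /wed2_rep !inE.
  case/orP => [/orP [|]|].
  - by case/imsetP => v /(subsetP Nsub) /h1 vS ->.
  - by case: ifP => pN; rewrite ?inE // => /eqP ->; apply: h2; apply: (subsetP Nsub).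
  - by case: ifP => qN; rewrite ?inE // => /eqP ->; apply: h3; apply: (subsetP Nsub).
have [i hi] := existsP fpi.
have piv v : v \in pi -> (v == i) || (v == ordS i).
  by move/(subsetP hi); rewrite !inE.
exists (inr false \in S), (inr true \in S), i.
move=> x; rewrite mem_enum => xS.
case: x xS => [v|[]] xS; rewrite !inE; last 2 first.
- by rewrite xS eqxx !orbT.
- by rewrite xS eqxx !orbT.
case: (eqVneq v p) => [ev | vp].
  subst v; case: (boolP (inr false \in S)) => bf; last by rewrite eqxx !orbT.
  have : p \in pi by rewrite inE eqxx xS bf !orbT.
  by case/piv/orP => /eqP <-; rewrite kap2_p ?eqxx ?orbT ?orTb.
case: (eqVneq v q) => [ev | vq].
  subst v; case: (boolP (inr true \in S)) => bt; last by rewrite eqxx !orbT.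
  have : q \in pi by rewrite inE eqxx xS bt !orbT.
  by case/piv/orP => /eqP <-; rewrite kap2_q // ?eqxx ?orbT ?orTb.
have : v \in pi by rewrite inE vp vq xS.
by case/piv/orP => /eqP <-; rewrite (kap2_o _ _ vp vq) ?eqxx ?orbT ?orTb.
Qed.


Definition Lam m (p q : 'I_m) (l1 l2 l3 : 'I_m -> 'rV[Z2]_2) (x : 'I_m + bool)
  : 'rV[Z2]_4 :=
  match x with
  | inl v => if v == p then erow i0 else if v == q then erow i1 else
     \row_k (if k == i0 then l1 v 0 j0 else if k == i1 then l1 v 0 j1
             else if k == i2 then l2 v 0 j0 else l3 v 0 j1)
  | inr b => if b then erow i3 else erow i2
  end.

Lemma compat2 (x y : 'rV[Z2]_2) : x \in abc -> y \in abc ->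
  (x == vec_a) = (y == vec_a) -> y 0 j1 = x 0 j1.
Proof. by move=> h1 h2; abc_split h1; abc_split h2; rewrite ?neqs // !mxE. Qed.

Lemma compat3 (x y : 'rV[Z2]_2) : x \in abc -> y \in abc ->
  (x == vec_b) = (y == vec_b) -> y 0 j0 = x 0 j0.
Proof. by move=> h1 h2; abc_split h1; abc_split h2; rewrite ?neqs // !mxE. Qed.

Lemma ker_sel f0 f1 g0 g1 :
  (forall k, [|| k == f0, k == f1, k == g0 | k == g1]) ->
  g0 != f0 -> g0 != f1 -> g1 != f0 -> g1 != f1 -> g0 != g1 -> f0 != f1 ->
  (kermx (selm f0 f1) == <<erow g0>> + <<erow g1>>)%MS.
Proof.
move=> cov h00 h01 h10 h11 hg hf; apply/andP; split.
- apply/row_subP => r; set t := row r _.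
  have : t *m selm f0 f1 = 0 by apply/sub_kermxP; exact: row_sub.
  clearbody t; rewrite mulmx_sel => /rowP ht.
  have t0 : t 0 f0 = 0 by have := ht j0; rewrite !mxE.
  have t1 : t 0 f1 = 0 by have := ht j1; rewrite !mxE.
  have -> : t = t 0 g0 *: erow g0 + t 0 g1 *: erow g1.
    apply/rowP => k; rewrite !mxE; case/or4P: (cov k) => /eqP ->.
    + by rewrite t0 eq_sym (negbTE h00) eq_sym (negbTE h10) !mulr0 addr0.
    + by rewrite t1 eq_sym (negbTE h01) eq_sym (negbTE h11) !mulr0 addr0.
    + by rewrite eqxx (negbTE hg) mulr1 mulr0 addr0.
    + by rewrite eqxx eq_sym (negbTE hg) mulr1 mulr0 add0r.
  by rewrite addmx_sub_adds // scalemx_sub // genmxE.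
- rewrite addsmx_sub !genmxE; apply/andP; split; apply/sub_kermxP;
  rewrite mulmx_sel; apply/rowP => j; rewrite !mxE; case: (I2_cases j) => -> /=.
  + by rewrite eq_sym (negbTE h00).
  + by rewrite eq_sym (negbTE h01).
  + by rewrite eq_sym (negbTE h10).
  + by rewrite eq_sym (negbTE h11).
Qed.

Lemma sel_full f0 f1 : f0 != f1 -> row_full (selm f0 f1).
Proof.
move=> hf; apply/row_fullP.
exists (\matrix_(i < 2, k < 4) ((k == (if i == j0 then f0 else f1))%:R)).
apply/matrixP => i j; rewrite !mxE (bigD1 (if i == j0 then f0 else f1)) //= !mxE eqxx mul1r.
rewrite big1 ?addr0; last by move=> k /negbTE hk; rewrite !mxE hk mul0r.
by case: (I2_cases i) => ->; case: (I2_cases j) => -> //=;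
  rewrite ?eqxx ?(negbTE hf) // eq_sym (negbTE hf).
Qed.


Section Construction.
Variables (m : nat) (p q : 'I_m) (l1 l2 l3 : 'I_m -> 'rV[Z2]_2).
Hypotheses (m3 : (3 <= m)%N) (pq : p != q)
  (H1 : charmap_Pm l1) (H2 : charmap_Pm l2) (H3 : charmap_Pm l3)
  (h1p : l1 p = vec_a) (h2p : l2 p = vec_a) (h3p : l3 p = vec_a)
  (h1q : l1 q = vec_b) (h2q : l2 q = vec_b) (h3q : l3 q = vec_b)
  (A2 : forall v, (l1 v == vec_a) = (l2 v == vec_a))
  (A3 : forall v, (l1 v == vec_b) = (l3 v == vec_b)).

Local Notation L := (Lam p q l1 l2 l3).

Lemma qp : q != p. Proof. by rewrite eq_sym. Qed.

Lemma C2 v : l2 v 0 j1 = l1 v 0 j1.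
Proof. exact: compat2 (cm_abc v H1) (cm_abc v H2) (A2 v). Qed.
Lemma C3 v : l3 v 0 j0 = l1 v 0 j0.
Proof. exact: compat3 (cm_abc v H1) (cm_abc v H3) (A3 v). Qed.

Lemma Lp : L (inl p) = erow i0. Proof. by rewrite /= eqxx. Qed.
Lemma Lq : L (inl q) = erow i1. Proof. by rewrite /= (negbTE qp) eqxx. Qed.
Lemma Lo v : v != p -> v != q -> L (inl v) =
     \row_k (if k == i0 then l1 v 0 j0 else if k == i1 then l1 v 0 j1
             else if k == i2 then l2 v 0 j0 else l3 v 0 j1).
Proof. by move=> vp vq; rewrite /= (negbTE vp) (negbTE vq). Qed.

Lemma cor1 v : L (kap2 p q (inl p) (inl q) v) *m selm i0 i1 = l1 v.
Proof.
rewrite mulmx_sel; apply/rowP => j; rewrite mxE.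
case: (eqVneq v p) => [->|vp].
  rewrite kap2_p ?Lp /= ?erowE ?h1p; by case: (I2_cases j) => ->; rewrite !mxE.
case: (eqVneq v q) => [->|vq].
  rewrite kap2_q // ?Lq /= ?erowE ?h1q; by case: (I2_cases j) => ->; rewrite !mxE.
by rewrite kap2_o // Lo //; case: (I2_cases j) => ->; rewrite !mxE //= ?C2 ?C3.
Qed.
Lemma cor2 v : L (kap2 p q (inr false) (inl q) v) *m selm i2 i1 = l2 v.
Proof.
rewrite mulmx_sel; apply/rowP => j; rewrite mxE.
case: (eqVneq v p) => [->|vp].
  rewrite kap2_p ?Lp /= ?erowE ?h2p; by case: (I2_cases j) => ->; rewrite !mxE.
case: (eqVneq v q) => [->|vq].
  rewrite kap2_q // ?Lq /= ?erowE ?h2q; by case: (I2_cases j) => ->; rewrite !mxE.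
by rewrite kap2_o // Lo //; case: (I2_cases j) => ->; rewrite !mxE //= ?C2 ?C3.
Qed.
Lemma cor3 v : L (kap2 p q (inl p) (inr true) v) *m selm i0 i3 = l3 v.
Proof.
rewrite mulmx_sel; apply/rowP => j; rewrite mxE.
case: (eqVneq v p) => [->|vp].
  rewrite kap2_p ?Lp /= ?erowE ?h3p; by case: (I2_cases j) => ->; rewrite !mxE.
case: (eqVneq v q) => [->|vq].
  rewrite kap2_q // ?Lq /= ?erowE ?h3q; by case: (I2_cases j) => ->; rewrite !mxE.
by rewrite kap2_o // Lo //; case: (I2_cases j) => ->; rewrite !mxE //= ?C2 ?C3.
Qed.


Definition mu v := L (kap2 p q (inr false) (inr true) v) *m selm i2 i3.

Lemma mu_l3 v : l1 v = l2 v -> mu v = l3 v.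
Proof.
move=> e; rewrite /mu mulmx_sel; apply/rowP => j; rewrite mxE.
case: (eqVneq v p) => [->|vp].
  rewrite kap2_p /= ?erowE h3p; by case: (I2_cases j) => ->; rewrite !mxE.
case: (eqVneq v q) => [->|vq].
  rewrite kap2_q // /= ?erowE h3q; by case: (I2_cases j) => ->; rewrite !mxE.
by rewrite kap2_o // Lo //; case: (I2_cases j) => ->; rewrite !mxE //= -e C3.
Qed.

Lemma mu_l2 v : l1 v = l3 v -> mu v = l2 v.
Proof.
move=> e; rewrite /mu mulmx_sel; apply/rowP => j; rewrite mxE.
case: (eqVneq v p) => [->|vp].
  rewrite kap2_p /= ?erowE h2p; by case: (I2_cases j) => ->; rewrite !mxE.
case: (eqVneq v q) => [->|vq].
  rewrite kap2_q // /= ?erowE h2q; by case: (I2_cases j) => ->; rewrite !mxE.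
by rewrite kap2_o // Lo //; case: (I2_cases j) => ->; rewrite !mxE //= -e C2.
Qed.

Hypothesis H3c : nbhd (symdiff l1 l2) :&: nbhd (symdiff l1 l3) = set0.

Lemma not_both x : x \in nbhd (symdiff l1 l2) -> x \in nbhd (symdiff l1 l3) -> False.
Proof. by move=> a b; have := in_set0 x; rewrite -H3c inE a b. Qed.

Lemma near_S (i : 'I_m) : near i (ordS i).
Proof. by rewrite /near ordSK eqxx. Qed.

Lemma nb_of (A : {set 'I_m}) i : (i \in A) || (ordS i \in A) -> i \in nbhd A.
Proof.
case/orP => h; first exact: in_nbhd_self.
by rewrite in_nbhd; apply/exists_inP; exists (ordS i) => //; exact: near_S.
Qed.

Lemma mu_cm i : mu i \in abc /\ mu i != mu (ordS i).
Proof.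
split.
  case: (boolP (i \in symdiff l1 l2)) => h2.
    case: (boolP (i \in symdiff l1 l3)) => h3.
      by case: (not_both (in_nbhd_self h2) (in_nbhd_self h3)).
    by move: h3; rewrite in_symdiff negbK => /eqP /mu_l2 ->; exact: cm_abc.
  by move: h2; rewrite in_symdiff negbK => /eqP /mu_l3 ->; exact: cm_abc.
case: (boolP ((i \in symdiff l1 l2) || (ordS i \in symdiff l1 l2))) => h2.
  case: (boolP ((i \in symdiff l1 l3) || (ordS i \in symdiff l1 l3))) => h3.
    by case: (not_both (nb_of h2) (nb_of h3)).
  move: h3; rewrite negb_or !in_symdiff !negbK => /andP [/eqP e1 /eqP e2].
  by rewrite (mu_l2 e1) (mu_l2 e2); exact: cm_adj.
move: h2; rewrite negb_or !in_symdiff !negbK => /andP [/eqP e1 /eqP e2].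
by rewrite (mu_l3 e1) (mu_l3 e2); exact: cm_adj.
Qed.

Lemma Lam_cm : is_charmap (wed2 (@Pm_face m) p q) L.
Proof.
move=> S hS; have [bp [bq [i hsub]]] := cover pq hS.
move: hsub; case: bp; case: bq => hsub;
  apply: (free_sub (enum_uniq _) hsub); rewrite /= ?eqxx ?(negbTE qp) ?eqxx.
- apply: (facet_free (I:=i2) (J:=i3) (R:=i0) (S:=i1)) => //; rewrite ?cor1 ?cm_abc //; exact: cm_adj.
- apply: (facet_free (I:=i2) (J:=i1) (R:=i0) (S:=i3)) => //; rewrite ?cor3 ?cm_abc //; exact: cm_adj.
- apply: (facet_free (I:=i0) (J:=i3) (R:=i2) (S:=i1)) => //; rewrite ?cor2 ?cm_abc //; exact: cm_adj.
- apply: (facet_free (I:=i0) (J:=i1) (R:=i2) (S:=i3)) => //; rewrite -/(mu i) -/(mu (ordS i));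
    by case: (mu_cm i) => a b; rewrite ?a ?b ?(proj1 (mu_cm (ordS i))).
Qed.


Lemma three_one : square_realizable p q l1 l2 l3.
Proof.
exists L; split.
- exact: Lam_cm.
- exists (selm i0 i1); split; [exact: sel_full | | exact: cor1].
  rewrite sum_set2 //= .
  by apply: ker_sel => // k; case: (I4_cases k) => ->.
- exists (selm i2 i1); split; [exact: sel_full | | exact: cor2].
  rewrite sum_set2 //= eqxx.
  by apply: ker_sel => // k; case: (I4_cases k) => ->.
- exists (selm i0 i3); split; [exact: sel_full | | exact: cor3].
  rewrite sum_set2 //= (negbTE qp) eqxx.
  by apply: ker_sel => // k; case: (I4_cases k) => ->.
Qed.

End Construction.

Lemma decomp (P1 Q1 P2 Q2 u : 'rV[Z2]_4) (M1 M2 M3 : 'M_(4,2)) (r1 r2 r3 : 'rV_2) :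
  (forall t, t *m M1 = 0 -> exists s s', t = s *: P2 + s' *: Q2) ->
  P1 *m M1 = vec_a -> Q1 *m M1 = vec_b ->
  P1 *m M2 = 0 -> Q1 *m M2 = vec_b -> P2 *m M2 = vec_a -> Q2 *m M2 = 0 ->
  P1 *m M3 = vec_a -> Q1 *m M3 = 0 -> P2 *m M3 = 0 -> Q2 *m M3 = vec_b ->
  u *m M1 = r1 -> u *m M2 = r2 -> u *m M3 = r3 ->
  u = r1 0 j0 *: P1 + r1 0 j1 *: Q1 + r2 0 j0 *: P2 + r3 0 j1 *: Q2.
Proof.
move=> K1 P1M1 Q1M1 P1M2 Q1M2 P2M2 Q2M2 P1M3 Q1M3 P2M3 Q2M3 E1 E2 E3.
have : (u - (r1 0 j0 *: P1 + r1 0 j1 *: Q1)) *m M1 = 0.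
  by rewrite mulmxBl mulmxDl -!scalemxAl P1M1 Q1M1 E1 -rV2_decomp subrr.
case/K1 => s [s' /eqP]; rewrite subr_eq => /eqP eu.
have hs : r2 0 j0 = s.
  have := congr1 (fun r : 'rV[Z2]_2 => r 0 j0) E2; rewrite /= eu !mulmxDl -!scalemxAl.
  rewrite P1M2 Q1M2 P2M2 Q2M2 !mxE /= => <-.
  by rewrite !mulr0 !mulr1 ?addr0 ?add0r.
have hs' : r3 0 j1 = s'.
  have := congr1 (fun r : 'rV[Z2]_2 => r 0 j1) E3; rewrite /= eu !mulmxDl -!scalemxAl.
  rewrite P1M3 Q1M3 P2M3 Q2M3 !mxE /= => <-.
  by rewrite !mulr0 !mulr1 ?addr0 ?add0r.
by rewrite eu hs hs' addrC !addrA.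
Qed.


Lemma inl_eq (V : eqType) (x y : V) : (@inl V bool x == inl y) = (x == y).
Proof. by []. Qed.

Lemma not_free3 m (p q w : 'I_m) (L : 'I_m + bool -> 'rV[Z2]_4) :
  is_charmap (wed2 (@Pm_face m) p q) L -> p != q -> w != p -> w != q ->
  L (inl w) != L (inl p) + L (inl q).
Proof.
move=> HL pq wp wq; apply/eqP => e.
have F : wed2 (@Pm_face m) p q ((inl @: [set w]) :|: [set inl p; inl q]).
  by apply: wed2_inl; apply/existsP; exists w; rewrite sub1set !inE eqxx.
have U : uniq [:: @inl _ bool w; inl p; inl q] by rewrite /= !inE !inl_eq (negbTE wp) (negbTE wq) (negbTE pq).
have Sb : forall x : 'I_m + bool, x \in [:: inl w; inl p; inl q] -> x \in enum ((inl @: [set w]) :|: [set inl p; inl q]).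
  by move=> x; rewrite mem_enum !inE => /or3P [] /eqP ->; rewrite ?eqxx ?orbT // imset_f ?inE.
have := free_sub U Sb (HL _ F); rewrite /= free_cons => /andP [/negP nA _]; apply: nA.
by rewrite e; apply: memvD; apply: memv_span; rewrite !inE eqxx ?orbT.
Qed.

Lemma not_free4 m (p q v w : 'I_m) (L : 'I_m + bool -> 'rV[Z2]_4) :
  is_charmap (wed2 (@Pm_face m) p q) L -> p != q -> v != p -> v != q ->
  w != p -> w != q -> v != w -> near v w ->
  L (inl v) != L (inl w) + L (inl p) + L (inl q).
Proof.
move=> HL pq vp vq wp wq vw nvw; apply/eqP => e.
have F : wed2 (@Pm_face m) p q ((inl @: [set v; w]) :|: [set inl p; inl q]).
  apply: wed2_inl; apply/existsP; move: nvw; rewrite /near => /or3P [] /eqP ev.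
  - by exists v; rewrite ev ord_predK subxx.
  - by move: vw; rewrite ev eqxx.
  - by exists w; rewrite ev setUC subxx.
have U : uniq [:: @inl _ bool v; inl w; inl p; inl q].
  by rewrite /= !inE !inl_eq (negbTE vp) (negbTE vq) (negbTE wp) (negbTE wq) (negbTE pq) (negbTE vw).
have Sb : forall x : 'I_m + bool, x \in [:: inl v; inl w; inl p; inl q] -> x \in enum ((inl @: [set v; w]) :|: [set inl p; inl q]).
  by move=> x; rewrite mem_enum !inE => /or4P [] /eqP ->; rewrite ?eqxx ?orbT // imset_f ?inE ?eqxx ?orbT.
have := free_sub U Sb (HL _ F); rewrite /= free_cons => /andP [/negP nA _]; apply: nA.
by rewrite e; apply: memvD; [apply: memvD|]; apply: memv_span; rewrite !inE eqxx ?orbT.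
Qed.


Lemma F2_id4 (a b c d : Z2) : a + c + d = b + c + d + a + b.
Proof.
by case: (F2_cases a) => ->; case: (F2_cases b) => ->; case: (F2_cases c) => ->;
  case: (F2_cases d) => ->; apply/eqP.
Qed.

Section Necessity.
Variables (m : nat) (p q : 'I_m) (l1 l2 l3 : 'I_m -> 'rV[Z2]_2).
Hypotheses (pq : p != q)
  (H1 : charmap_Pm l1) (H2 : charmap_Pm l2) (H3 : charmap_Pm l3)
  (h1p : l1 p = vec_a) (h2p : l2 p = vec_a) (h3p : l3 p = vec_a)
  (h1q : l1 q = vec_b) (h2q : l2 q = vec_b) (h3q : l3 q = vec_b)
  (A2 : forall v, (l1 v == vec_a) = (l2 v == vec_a))
  (A3 : forall v, (l1 v == vec_b) = (l3 v == vec_b)).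

Lemma one_two : square_realizable p q l1 l2 l3 ->
  nbhd (symdiff l1 l2) :&: symdiff l1 l3 = set0.
Proof.
case=> L [HL [M1 [_ k1 e1]] [M2 [_ k2 e2]] [M3 [_ k3 e3]]].
rewrite sum_set2 // in k1; rewrite sum_set2 // in k2; rewrite sum_set2 // in k3.
have [P2M1 Q2M1 K1] := ker2 k1.
have [P1M2 Q2M2 _] := ker2 k2.
have [P2M3 Q1M3 _] := ker2 k3.
have P1M1 : L (inl p) *m M1 = vec_a by rewrite -h1p -(e1 p) kap2_p.
have Q1M1 : L (inl q) *m M1 = vec_b by rewrite -h1q -(e1 q) kap2_q.
have Q1M2 : L (inl q) *m M2 = vec_b by rewrite -h2q -(e2 q) kap2_q.
have P2M2 : L (inr false) *m M2 = vec_a by rewrite -h2p -(e2 p) kap2_p.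
have P1M3 : L (inl p) *m M3 = vec_a by rewrite -h3p -(e3 p) kap2_p.
have Q2M3 : L (inr true) *m M3 = vec_b by rewrite -h3q -(e3 q) kap2_q.
have dec u : u != p -> u != q -> L (inl u) = l1 u 0 j0 *: L (inl p) +
    l1 u 0 j1 *: L (inl q) + l2 u 0 j0 *: L (inr false) + l3 u 0 j1 *: L (inr true).
  move=> up uq; apply: (decomp K1 P1M1 Q1M1 P1M2 Q1M2 P2M2 Q2M2 P1M3 Q1M3 P2M3 Q2M3).
  - by rewrite -(e1 u) kap2_o.
  - by rewrite -(e2 u) kap2_o.
  - by rewrite -(e3 u) kap2_o.
have pD2 : p \notin symdiff l1 l2 by rewrite in_symdiff h1p h2p eqxx.
have qD2 : q \notin symdiff l1 l2 by rewrite in_symdiff h1q h2q eqxx.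
have pD3 : p \notin symdiff l1 l3 by rewrite in_symdiff h1p h3p eqxx.
have qD3 : q \notin symdiff l1 l3 by rewrite in_symdiff h1q h3q eqxx.
have nD w (A : {set 'I_m}) : p \notin A -> q \notin A -> w \in A -> (w != p) && (w != q).
  by move=> hp hq hw; apply/andP; split; apply/eqP => e; move: hw; rewrite e ?(negbTE hp) ?(negbTE hq).
have caseA w : w \in symdiff l1 l2 -> w \in symdiff l1 l3 -> False.
  move=> d2 d3; case/andP: (nD _ _ pD2 qD2 d2) => wp wq.
  move: (d2) (d3); rewrite !in_symdiff => n2 n3.
  have [c1 c2 c3] := vals_A (cm_abc w H1) (cm_abc w H2) (cm_abc w H3) (A2 w) (A3 w) n2 n3.
  have := dec w wp wq; rewrite c1 c2 c3 !mxE /= scale1r scale1r !scale0r !addr0 => e.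
  by move: (not_free3 HL pq wp wq); rewrite e eqxx.
apply/setP => v; rewrite inE in_set0; apply/negP => /andP [hv2 hv3].
case: (boolP (v \in symdiff l1 l2)) => v2; first exact: caseA v2 hv3.
move: hv2; rewrite in_nbhd => /exists_inP [w w2 nvw].
have vw : v != w by apply/eqP => e; move: v2; rewrite e w2.
case: (boolP (w \in symdiff l1 l3)) => w3; first exact: caseA w2 w3.
case/andP: (nD _ _ pD3 qD3 hv3) => vp vq.
case/andP: (nD _ _ pD2 qD2 w2) => wp wq.
move: v2 w3 (hv3) (w2); rewrite !in_symdiff !negbK => /eqP e2v /eqP e3w n3v n2w.
have x1 : l1 v != l2 w by rewrite e2v; exact: near_neq H2 nvw vw.
have x2 : l3 v != l1 w by rewrite e3w; exact: near_neq H3 nvw vw.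
have [va vc wb wc] := vals_B (cm_abc v H1) (cm_abc v H3) (cm_abc w H1) (cm_abc w H2)
  (A3 v) (A2 w) n3v n2w (near_neq H1 nvw vw) x1 x2.
have dv := dec v vp vq; have dw := dec w wp wq.
rewrite -e2v va vc !mxE /= in dv.
rewrite -e3w wb wc !mxE /= in dw.
move: (not_free4 HL pq vp vq wp wq vw nvw); rewrite dv dw.
case/negP; apply/eqP/rowP => k; rewrite !mxE.
rewrite !mul1r !mul0r !add0r !addr0.
exact: F2_id4.
Qed.

End Necessity.

End Helpers.

Theorem lemma3 (m : nat) (p q : 'I_m) (l1 l2 l3 : 'I_m -> 'rV[Z2]_2) :
  (3 <= m)%N -> p != q ->
  charmap_Pm l1 -> charmap_Pm l2 -> charmap_Pm l3 ->
  l1 p = vec_a -> l2 p = vec_a -> l3 p = vec_a ->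
  l1 q = vec_b -> l2 q = vec_b -> l3 q = vec_b ->
  p_adjacent p l1 l2 -> p_adjacent q l1 l3 ->
  [<-> square_realizable p q l1 l2 l3;
       nbhd (symdiff l1 l2) :&: symdiff l1 l3 = set0;
       nbhd (symdiff l1 l2) :&: nbhd (symdiff l1 l3) = set0].
Proof.
move=> m3 pq H1 H2 H3 h1p h2p h3p h1q h2q h3q adj2 adj3.
have A2 := padj_same adj2 H1 H2 h1p h2p.
have A3 := padj_same adj3 H1 H3 h1q h3q.
tfae => H.
- by apply: (one_two (p:=p) (q:=q)).
- by apply: two_three.
- by apply: three_one.
Qed.
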